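(* Let $\mathbf{J}\in\mathbb{R}^{n\times n}$ be a real symmetric matrix with zero diagonal, and let $\alpha,\beta>0$ be such that $\mu:=\lambda_{\min}(\mathbf{J}+\alpha\mathbf{I})>0$. Let $\{\boldsymbol{x}^{(k)}\}_{k\ge0}$ be the DOCH iterates starting from an arbitrary $\boldsymbol{x}^{(0)}\in\mathbb{R}^n$. Then the sequence $\{\boldsymbol{x}^{(k)}\}$ is bounded, and $\lim_{k\to\infty}\|\boldsymbol{x}^{(k+1)}-\boldsymbol{x}^{(k)}\|_2=0$.
   Context: Let $f(\boldsymbol{x})=\frac{\beta}{4}\sum_i x_i^4$, $g(\boldsymbol{x})=\frac12\boldsymbol{x}^\top(\mathbf{J}+\alpha\mathbf{I})\boldsymbol{x}$ and $\mathcal{H}=f-g$. The DOCH iterates are defined by $\boldsymbol{x}^{(k+1)}$ being the minimizer of $F_k(\boldsymbol{x})=f(\boldsymbol{x})-g(\boldsymbol{x}^{(k)})-\nabla g(\boldsymbol{x}^{(k)})^\top(\boldsymbol{x}-\boldsymbol{x}^{(k)})$; explicitly, $\boldsymbol{x}^{(k+1)}=\varphi(\beta^{-1}(\mathbf{J}+\alpha\mathbf{I})\boldsymbol{x}^{(k)})$ with $\varphi$ the componentwise real cube root. *)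

(* Defs.v *)
From HB Require Import structures.
From mathcomp Require Import all_boot all_order all_algebra.
From mathcomp Require Import all_classical all_reals all_analysis.
Set Implicit Arguments. Unset Strict Implicit. Unset Printing Implicit Defensive.
Import Order.TTheory GRing.Theory Num.Theory.
Local Open Scope ring_scope.

Definition cbrt {R : realType} (t : R) : R := Num.sg t * (`|t| `^ (3%:R^-1)).

Definition norm2 {R : realType} {n : nat} (v : 'cV[R]_n) : R :=
  Num.sqrt (\sum_(i < n) (v i 0) ^+ 2).

Definition doch_step {R : realType} {n : nat} (J : 'M[R]_n) (alpha beta : R)
  (x : 'cV[R]_n) : 'cV[R]_n :=
  \col_i cbrt (beta^-1 * ((J + alpha%:M) *m x) i 0).

Definition doch {R : realType} {n : nat} (J : 'M[R]_n) (alpha beta : R)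
  (x0 : 'cV[R]_n) (k : nat) : 'cV[R]_n :=
  iter k (doch_step J alpha beta) x0.

(* Main.v *)
Require Import Defs.
From HB Require Import structures.
From mathcomp Require Import all_boot all_order all_algebra.
From mathcomp Require Import all_classical all_reals all_analysis.
From mathcomp Require Import ring lra.
Import Order.TTheory GRing.Theory Num.Theory.
Import numFieldNormedType.Exports.
Local Open Scope classical_set_scope.
Local Open Scope ring_scope.
Set Implicit Arguments.
Unset Strict Implicit.
Lemma cbrt3 (R : realType) (t : R) : cbrt t ^+ 3 = t.
Proof.
have h : (`|t| `^ (3%:R^-1)) ^+ 3 = `|t|.
  rewrite -powR_mulrn ?powR_ge0 // -powRrM mulVf ?pnatr_eq0 //.
  by rewrite powRr1 ?normr_ge0.
rewrite /cbrt exprMn h.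
case: (sgrP t) => ht; rewrite ?expr1n ?mul1r ?normr0 ?mul0r //.
- by rewrite ht expr0n mul0r.
- by rewrite -signr_odd /= mulN1r opprK.
Qed.

Lemma quart_ineq (R : realType) (a b : R) : 0 <= a ^+ 4 - b ^+ 4 - 4%:R * b ^+ 3 * (a - b).
Proof.
have -> : a ^+ 4 - b ^+ 4 - 4%:R * b ^+ 3 * (a - b) = (a - b) ^+ 2 * ((a + b) ^+ 2 + 2%:R * b ^+ 2) by ring.
by apply: mulr_ge0; [exact: sqr_ge0| apply: addr_ge0; [exact: sqr_ge0 | apply: mulr_ge0 => //; exact: sqr_ge0]].
Qed.

Lemma cbrt_le (R : realType) (t M : R) : 0 <= M -> `|t| <= M ^+ 3 -> `|cbrt t| <= M.
Proof.
move=> M0 h; rewrite -(ler_pXn2r (n:=3)) ?nnegrE ?normr_ge0 //.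
by rewrite -normrX cbrt3.
Qed.
Lemma cont_sum (T : topologicalType) (R : realType) (I : Type) (s : seq I)
  (F : I -> T -> R) : (forall i, continuous (F i)) ->
  continuous (fun x => \sum_(i <- s) F i x).
Proof.
move=> h; elim: s => [|a s IH].
  have -> : (fun x => \sum_(i <- [::]) F i x) = (fun=> 0) by apply/funext => y; rewrite big_nil.
  exact: cst_continuous.
have -> : (fun x => \sum_(i <- a :: s) F i x) = (F a + fun x => \sum_(i <- s) F i x).
  by apply/funext => y; rewrite big_cons.
by move=> x; apply: continuousD; [exact: h | exact: IH].
Qed.

Lemma quad0 (R : realType) (a d : R) : (forall t, 0 <= t * a + t ^+ 2 * d) -> a = 0.
Proof.
move=> H; apply/eqP; apply/negP => /negP ha.
set D := `|d| + 1.
have D0 : 0 < D by rewrite /D ltr_pwDr // normr_ge0.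
have dD : d < D by rewrite /D (le_lt_trans (ler_norm d)) // ltrDl.
set t := - a / D.
have ea : a = - t * D by rewrite /t; field; rewrite gt_eqF.
have t0 : t != 0 by apply: contra ha => /eqP t0; rewrite ea t0 oppr0 mul0r.
have t2 : 0 < t ^+ 2 by rewrite exprn_even_gt0.
have := H t; rewrite ea => h.
nra.
Qed.
Definition Bf {R : realType} {n} (A : 'M[R]_n) (x y : 'cV[R]_n) : R :=
  \sum_i \sum_j x i 0 * A i j * y j 0.

Section BfLemmas.
Variables (R : realType) (n : nat) (A : 'M[R]_n).

Lemma BfDl x y z : Bf A (x + y) z = Bf A x z + Bf A y z.
Proof. rewrite /Bf -big_split; apply: eq_bigr => i _; rewrite -big_split; apply: eq_bigr => j _; rewrite mxE /=; ring. Qed.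
Lemma BfDr x y z : Bf A z (x + y) = Bf A z x + Bf A z y.
Proof. rewrite /Bf -big_split; apply: eq_bigr => i _; rewrite -big_split; apply: eq_bigr => j _; rewrite mxE /=; ring. Qed.
Lemma BfZl k x z : Bf A (k *: x) z = k * Bf A x z.
Proof. rewrite /Bf mulr_sumr; apply: eq_bigr => i _; rewrite mulr_sumr; apply: eq_bigr => j _; rewrite mxE; ring. Qed.
Lemma BfZr k x z : Bf A z (k *: x) = k * Bf A z x.
Proof. rewrite /Bf mulr_sumr; apply: eq_bigr => i _; rewrite mulr_sumr; apply: eq_bigr => j _; rewrite mxE; ring. Qed.
Lemma BfN x z : Bf A (- x) z = - Bf A x z.
Proof. by rewrite -scaleN1r BfZl mulN1r. Qed.
Lemma BfNr x z : Bf A z (- x) = - Bf A z x.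
Proof. by rewrite -scaleN1r BfZr mulN1r. Qed.
Lemma Bf_sym x y : A^T = A -> Bf A x y = Bf A y x.
Proof.
move=> sA; rewrite /Bf exchange_big; apply: eq_bigr => i _; apply: eq_bigr => j _.
by rewrite -{1}sA mxE; ring.
Qed.
Lemma Bf0 x : Bf A 0 x = 0.
Proof. by rewrite -(scale0r 0) BfZl mul0r. Qed.
End BfLemmas.

Lemma Bf1 (R : realType) n (x y : 'cV[R]_n) : Bf 1%:M x y = \sum_i x i 0 * y i 0.
Proof.
rewrite /Bf; apply: eq_bigr => i _.
rewrite (bigD1 i) //= big1 ?addr0; first by rewrite mxE eqxx mulr1n mulr1.
by move=> j ji; rewrite mxE eq_sym (negbTE ji) mulr0n mulr0 mul0r.
Qed.

Lemma Bf_delta (R : realType) n (A : 'M[R]_n) (x : 'cV[R]_n) j :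
  Bf A x (delta_mx j 0) = \sum_i x i 0 * A i j.
Proof.
rewrite /Bf; apply: eq_bigr => i _.
rewrite (bigD1 j) //= big1 ?addr0; first by rewrite mxE !eqxx mulr1.
by move=> k kj; rewrite mxE (negbTE kj) /= mulr0.
Qed.

Lemma Bf1_ge0 (R : realType) n (x : 'cV[R]_n) : 0 <= Bf 1%:M x x.
Proof. by rewrite Bf1; apply: sumr_ge0 => i _; rewrite -expr2 sqr_ge0. Qed.

Lemma Bf1_eq0 (R : realType) n (x : 'cV[R]_n) : Bf 1%:M x x = 0 -> x = 0.
Proof.
rewrite Bf1 => /psumr_eq0P h; apply/matrixP => i j; rewrite (ord1 j) mxE.
have := h (fun i _ => ltac:(by rewrite -expr2 sqr_ge0)) i isT.
by move/eqP; rewrite mulf_eq0 orbb => /eqP.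
Qed.

Lemma pd (R : realType) n (A : 'M[R]_n) : A^T = A ->
  (forall a, eigenvalue A a -> 0 < a) ->
  exists2 m : R, 0 < m & forall x, m * Bf 1%:M x x <= Bf A x x.
Proof.
case: n A => [|n] A sA eig.
  by exists 1 => // x; rewrite /Bf !big_ord0 mulr0.
have contB : forall B : 'M[R]_n.+1, continuous (fun u : 'rV[R]_n.+1 => Bf B u^T u^T).
  move=> B.
  have -> : (fun u : 'rV[R]_n.+1 => Bf B u^T u^T) = (fun u => \sum_i \sum_j (u 0 i * B i j * u 0 j)).
    by apply/funext => u; rewrite /Bf; apply: eq_bigr => i _; apply: eq_bigr => j _; rewrite !mxE.
  apply: cont_sum => i; apply: cont_sum => j.
  move=> u; apply: (continuousM (s := fun u : 'rV[R]_n.+1 => u 0 i * B i j) (t := fun u => u 0 j)); last exact: coord_continuous.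
  apply: (continuousM (s := fun u : 'rV[R]_n.+1 => u 0 i) (t := fun=> B i j)); [exact: coord_continuous | exact: cst_continuous].
set S := [set u : 'rV[R]_n.+1 | Bf 1%:M u^T u^T = 1].
have S0 : S !=set0.
  exists (delta_mx 0 ord0); rewrite /S /= Bf1 (bigD1 ord0) //= big1 ?addr0.
    by rewrite !mxE !eqxx mulr1.
  by move=> i i0; rewrite !mxE (negbTE i0) andbF mulr0.
have cl : closed S.
  apply: (@preimage_closed _ _ (fun u : 'rV[R]_n.+1 => Bf 1%:M u^T u^T) [set 1]).
    by move=> u _; exact: contB.
  exact: closed_eq.
have cS : compact S.
  have cube := @rV_compact R n.+1 (fun _ => `[-1, 1]%classic) (fun _ => @segment_compact R (-1) 1).
  apply: (subclosed_compact cl cube).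
  move=> u Su i /=; rewrite in_itv /= -ler_norml.
  have : u 0 i * u 0 i <= 1.
    rewrite -Su Bf1 (bigD1 i) //= !mxE lerDl; apply: sumr_ge0 => k _.
    by rewrite -expr2 sqr_ge0.
  move=> h; rewrite -(ler_pXn2r (n:=2)) ?nnegrE ?normr_ge0 // expr1n real_normK ?num_real //.
have [c cS' minc] := EVT_min_rV S0 cS (continuous_subspaceT (contB A)).
have Sc : Bf 1%:M c^T c^T = 1 by move: cS'; rewrite inE.
set m := Bf A c^T c^T.
have key : forall x, m * Bf 1%:M x x <= Bf A x x.
  move=> x; have := Bf1_ge0 x; rewrite le0r => /orP[/eqP e0|e0].
    by rewrite (Bf1_eq0 e0) !Bf0 mulr0.
  set e := Bf 1%:M x x in e0 *.
  set k := (Num.sqrt e)^-1.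
  have kk : k * k = e^-1 by rewrite /k -invfM -expr2 sqr_sqrtr // ltW.
  have Sk : (k *: x)^T \in S.
    by rewrite inE /S /= trmxK BfZl BfZr mulrA kk -/e mulVf // gt_eqF.
  have := minc _ Sk; rewrite trmxK BfZl BfZr mulrA kk -/m => h.
  by rewrite -ler_pdivlMr // mulrC.
have ev : forall y, Bf A c^T y = m * Bf 1%:M c^T y.
  move=> y.
  have h : forall t, 0 <= t * (2%:R * (Bf A c^T y - m * Bf 1%:M c^T y)) + t ^+ 2 * (Bf A y y - m * Bf 1%:M y y).
    move=> t; have := key (c^T + t *: y).
    rewrite !BfDl !BfDr !BfZl !BfZr Sc -/m [Bf A y c^T]Bf_sym // [Bf 1%:M y c^T]Bf_sym ?trmx1 //.
    move=> H; nra.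
  have := quad0 h => /eqP; rewrite mulf_eq0 pnatr_eq0 /= subr_eq0 => /eqP //.
have mev : eigenvalue A m.
  apply/eigenvalueP; exists c.
    apply/rowP => j.
    have e1 : Bf 1%:M c^T (delta_mx j 0) = c 0 j.
      rewrite Bf1 (bigD1 j) //= big1 ?addr0; first by rewrite !mxE !eqxx mulr1.
      by move=> i ij; rewrite !mxE (negbTE ij) mulr0.
    rewrite !mxE -e1 -ev Bf_delta; apply: eq_bigr => i _; by rewrite mxE.
  apply/eqP => c0; move: Sc; rewrite c0 trmx0 Bf0 => /eqP; by rewrite eq_sym oner_eq0.
by exists m => //; apply: eig.
Qed.

Definition Hf {R : realType} {n} (A : 'M[R]_n) (beta : R) (x : 'cV[R]_n) : R :=
  beta / 4%:R * \sum_i x i 0 ^+ 4 - Bf A x x / 2%:R.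

Lemma descent (R : realType) n (J : 'M[R]_n) alpha beta (x : 'cV[R]_n) :
  (J + alpha%:M)^T = J + alpha%:M -> 0 < beta ->
  Bf (J + alpha%:M) (doch_step J alpha beta x - x) (doch_step J alpha beta x - x) / 2%:R
  <= Hf (J + alpha%:M) beta x - Hf (J + alpha%:M) beta (doch_step J alpha beta x).
Proof.
set A := J + alpha%:M; set y := doch_step J alpha beta x => sA b0.
have key : Bf A (x - y) x <= beta / 4%:R * \sum_i x i 0 ^+ 4 - beta / 4%:R * \sum_i y i 0 ^+ 4.
  rewrite -mulrBr -sumrB mulr_sumr /Bf; apply: ler_sum => i _.
  have e1 : \sum_j (x - y) i 0 * A i j * x j 0 = (x i 0 - y i 0) * (A *m x) i 0.
    rewrite [(A *m x) i 0]mxE mulr_sumr; apply: eq_bigr => j _; rewrite [(x - y) i 0]mxE [(- y) i 0]mxE; ring.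
  have e2 : (A *m x) i 0 = beta * y i 0 ^+ 3.
    by rewrite /y /doch_step [in RHS]mxE cbrt3 mulrA mulfV ?mul1r // gt_eqF.
  rewrite e1 e2; have := quart_ineq (x i 0) (y i 0); nra.
move: key; rewrite /Hf (BfDl A x (-y)) (BfN A y x) (BfDl A y (-x)) (BfDr A y (-x) y) (BfDr A y (-x) (-x)) (BfNr A x y) (BfN A x y) (BfN A x (-x)) (BfNr A x x) (Bf_sym x y sA).
lra.
Qed.

Unset Implicit Arguments.
Set Strict Implicit.

Theorem propositionS7 (R : realType) (n : nat) (J : 'M[R]_n) (alpha beta : R)
  (x0 : 'cV[R]_n) :
  J^T = J ->
  (forall i, J i i = 0) ->
  0 < alpha -> 0 < beta ->
  (* lambda_min (J + alpha I) > 0 : every eigenvalue of J + alpha I is positive *)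
  (forall a : R, eigenvalue (J + alpha%:M) a -> 0 < a) ->
  (exists M : R, forall k, norm2 (doch J alpha beta x0 k) <= M) /\
  ((fun k => norm2 (doch J alpha beta x0 k.+1 - doch J alpha beta x0 k))
     @ \oo --> (0 : R)).
Proof.
move=> sJ dJ a0 b0 eig.
have sA : (J + alpha%:M)^T = J + alpha%:M by rewrite linearD /= sJ tr_scalar_mx.
have [m m0 hm] := pd sA eig.
set A := J + alpha%:M in sA hm.
set x := doch J alpha beta x0.
have xS : forall k, x k.+1 = doch_step J alpha beta (x k) by [].
set S := \sum_i \sum_j `|A i j|.
have S0 : 0 <= S by apply: sumr_ge0 => i _; apply: sumr_ge0 => j _.
set K := S / beta.
have K0 : 0 <= K by apply: divr_ge0 => //; exact: ltW.
set M := 1 + K + \sum_i `|x0 i 0|.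
have X0 : 0 <= \sum_i `|x0 i 0| by apply: sumr_ge0.
have M1 : 1 <= M by rewrite /M; lra.
have KM : K <= M by rewrite /M; lra.
have M0 : 0 <= M by lra.
have bnd : forall k i, `|x k i 0| <= M.
  elim=> [|k IH] i.
    rewrite /M (bigD1 i) //=.
    have : 0 <= \sum_(j | j != i) `|x0 j 0| by apply: sumr_ge0.
    rewrite /x /doch /=; lra.
  rewrite xS /doch_step mxE; apply: cbrt_le => //.
  have h1 : `|(A *m x k) i 0| <= M * S.
    rewrite mxE; apply: (le_trans (ler_norm_sum _ _ _)).
    apply: (@le_trans _ _ (\sum_j `|A i j| * M)).
      by apply: ler_sum => j _; rewrite normrM ler_wpM2l.
    rewrite -mulr_suml mulrC ler_wpM2l // /S [X in _ <= X](bigD1 i) //= lerDl.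
    by apply: sumr_ge0 => k0 _; apply: sumr_ge0.
  rewrite -/A normrM normfV (gtr0_norm b0).
  have : beta^-1 * `|(A *m x k) i 0| <= M * K.
    apply: (le_trans (ler_wpM2l _ h1)); first by rewrite invr_ge0 ltW.
    rewrite le_eqVlt; apply/orP; left; apply/eqP; rewrite /K; ring.
  have : M * K <= M ^+ 3.
    have -> : M ^+ 3 = M * (M * M) by rewrite !exprS expr0 mulr1.
    rewrite ler_wpM2l //; nra.
  lra.
split.
  exists (Num.sqrt (\sum_(i < n) M ^+ 2)) => k.
  rewrite /norm2 ler_sqrt; last by apply: sumr_ge0 => i _; apply: sqr_ge0.
  apply: ler_sum => i _.
  rewrite -real_normK ?num_real // ler_pXn2r ?nnegrE ?normr_ge0 //; exact: bnd.
set h := fun k => Hf A beta (x k).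
set S' := \sum_i \sum_j M * `|A i j| * M.
have hL : forall k, - S' / 2%:R <= h k.
  move=> k; rewrite /h /Hf.
  have e4 : 0 <= beta / 4%:R * \sum_i x k i 0 ^+ 4.
    apply: mulr_ge0; first by apply: divr_ge0 => //; exact: ltW.
    by apply: sumr_ge0 => i _; apply: exprn_even_ge0.
  have : Bf A (x k) (x k) <= S'.
    rewrite /Bf /S'; apply: ler_sum => i _; apply: ler_sum => j _.
    apply: (le_trans (ler_norm _)); rewrite !normrM.
    apply: ler_pM; rewrite ?mulr_ge0 ?normr_ge0 //; try exact: bnd.
    by apply: ler_pM; rewrite ?normr_ge0 //; exact: bnd.
  lra.
have hd : forall k, m * Bf 1%:M (x k.+1 - x k) (x k.+1 - x k) / 2%:R <= h k - h k.+1.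
  move=> k; apply: le_trans (descent _ sA b0).
  by rewrite ler_pM2r // hm.
have hni : nonincreasing_seq h.
  apply/nonincreasing_seqP => k; have := hd k.
  have := Bf1_ge0 (x k.+1 - x k); nra.
have hc : cvgn h.
  apply: nonincreasing_is_cvgn => //; exists (- S' / 2%:R) => _ [k _ <-]; exact: hL.
have hge := nonincreasing_cvgn_ge hni hc.
apply/cvgrPdist_lt => e e0.
have d0 : 0 < m * e ^+ 2 / 4%:R by apply: divr_gt0 => //; apply: mulr_gt0 => //; apply: exprn_gt0.
move/cvgrPdist_lt: hc => /(_ _ d0); apply: filterS => k hk.
rewrite sub0r normrN ger0_norm ?sqrtr_ge0 //.
have nd : norm2 (x k.+1 - x k) = Num.sqrt (Bf 1%:M (x k.+1 - x k) (x k.+1 - x k)).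
  by rewrite /norm2 Bf1; congr Num.sqrt; apply: eq_bigr => i _; rewrite expr2.
rewrite nd -(ger0_norm (ltW e0)) -sqrtr_sqr ltr_sqrt ?exprn_gt0 //.
rewrite -(ltr_pM2l m0).
have := hd k; have := hge k.+1; move: hk.
have me0 : 0 < m * e ^+ 2 by apply: mulr_gt0 => //; apply: exprn_gt0.
have := ler_norm (h k - limn h); rewrite distrC.
set ms := m * Bf 1%:M _ _; set me := m * e ^+ 2 in me0 *; set l := limn h.
move=> n1 hk h2 h3.
have e3 : me / 4%:R = me / 2%:R / 2%:R by field.
lra.
Qed.
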